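(* For arbitrary nonnegative rates $p_1,\dots,p_n,q_1,\dots,q_n$, the Markov chain on $\Omega_{L,n}$ lumps to the one-dimensional ASEP on $\Psi_{L,n}$ via the map $\Pi$: for every $\omega\in\Omega_{L,n}$ and every $\psi\in\Psi_{L,n}$ with $\psi\neq\Pi(\omega)$, the sum of the transition rates from $\omega$ to configurations in $\Pi^{-1}(\psi)$ equals the ASEP transition rate from $\Pi(\omega)$ to $\psi$. In particular the image under $\Pi$ of the chain on $\Omega_{L,n}$ is the ASEP on $\Psi_{L,n}$.
   Context: Fix $1\le n\le L$. Particle labels $k$ are taken modulo $n$, positions modulo $L$. $\Omega_{L,n}$ is the set of words $w_1\cdots w_L$ on the ring $\mathbb{Z}/L\mathbb{Z}$ over the alphabet $\{\bullet_1,\dots,\bullet_n,\Box_1,\dots,\Box_n\}$ in which each $\bullet_k$ occurs exactly once, the letters $\bullet_1,\dots,\bullet_n$ appear in this cyclic order, and the remaining $L-n$ letters are arbitrary $\Box_i$'s. The chain on $\Omega_{L,n}$ has transitions (displayed segments are consecutive positions, rest unchanged, $C$ a possibly empty word in the $\Box$-letters): (T1) $\bullet_k\Box_i \to \Box_i\bullet_k$ at rate $p_k$, if $i\neq k$; (T2) $\bullet_{k-1}\,C\,\bullet_k\Box_k \to \bullet_{k-1}\Box_{k-1}\,C\,\bullet_k$ at rate $p_k$; (T3) $\Box_i\bullet_k \to \bullet_k\Box_i$ at rate $q_k$, if $i\neq k$; (T4) $\Box_k\bullet_k\,C\,\bullet_{k+1} \to \bullet_k\,C\,\Box_{k+1}\bullet_{k+1}$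 at rate $q_k$. $\Psi_{L,n}$ is the set of words on the ring $\mathbb{Z}/L\mathbb{Z}$ containing each of $\bullet_1,\dots,\bullet_n$ exactly once in this cyclic order and $L-n$ vacancies $\Box$. The ASEP on $\Psi_{L,n}$ has only the transitions $\bullet_k\Box\to\Box\bullet_k$ at rate $p_k$ and $\Box\bullet_k\to\bullet_k\Box$ at rate $q_k$ (on consecutive positions). The map $\Pi:\Omega_{L,n}\to\Psi_{L,n}$ replaces every letter $\Box_i$ by $\Box$. *)

(* Defs.v *)
From mathcomp Require Import all_boot all_order all_algebra.
Set Implicit Arguments. Unset Strict Implicit. Unset Printing Implicit Defensive.
Import Order.TTheory GRing.Theory Num.Theory.

Definition radd (L : nat) (x : 'I_L) (d : nat) : 'I_L :=
  Ordinal (ltn_pmod (x + d) (leq_ltn_trans (leq0n x) (ltn_ord x))).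

Definition rpred (L : nat) (x : 'I_L) : 'I_L := radd x (L - 1).

Definition off (L : nat) (a x : 'I_L) : nat := (x + L - a) %% L.

(* labels k+1 and k-1 modulo n (labels are 0,...,n-1 instead of 1,...,n) *)
Definition lsucc (n : nat) (k : 'I_n) : 'I_n := radd k 1.
Definition lpred (n : nat) (k : 'I_n) : 'I_n := rpred k.

(* Omega alphabet: inl k = bullet_k, inr i = Box_i *)
Definition OLetter (n : nat) := ('I_n + 'I_n)%type.
(* Psi alphabet: inl k = bullet_k, inr tt = Box (vacancy) *)
Definition PLetter (n : nat) := ('I_n + unit)%type.

Definition OWord (n L : nat) := {ffun 'I_L -> OLetter n}.
Definition PWord (n L : nat) := {ffun 'I_L -> PLetter n}.

Definition lbul (n : nat) (B : Type) (c : ('I_n + B)%type) : option 'I_n :=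
  match c with inl k => Some k | inr _ => None end.

(* A word on the ring Z/LZ containing each bullet_k exactly once and in which the
   bullets appear in the cyclic order 1,2,...,n: the first bullet met strictly
   clockwise after bullet_k (after d steps, 0 < d <= L) is bullet_{k+1}. *)
Definition valid_word (n L : nat) (B : finType) (w : {ffun 'I_L -> ('I_n + B)%type}) : bool :=
  [forall k : 'I_n, #|[set x | lbul (w x) == Some k]| == 1] &&
  [forall x : 'I_L, forall k : 'I_n, (lbul (w x) == Some k) ==>
     [exists d : 'I_L,
        (lbul (w (radd x d.+1)) == Some (lsucc k)) &&
        [forall e : 'I_L, (e < d) ==> (lbul (w (radd x e.+1)) == None)]]].

Definition inOmega (n L : nat) (w : OWord n L) : bool := valid_word w.
Definition inPsi (n L : nat) (w : PWord n L) : bool := valid_word w.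

Definition Pi (n L : nat) (w : OWord n L) : PWord n L :=
  [ffun x => match w x with inl k => inl k | inr _ => inr tt end].

Definition swapw (L : nat) (A : finType) (w : {ffun 'I_L -> A}) (x y : 'I_L)
  : {ffun 'I_L -> A} :=
  [ffun z => if z == x then w y else if z == y then w x else w z].

Definition is_box (n : nat) (c : OLetter n) : bool := lbul c == None.

(* (T1) bullet_k Box_i -> Box_i bullet_k, i <> k, bullet_k at position j *)
Definition t1_app (n L : nat) (w : OWord n L) (k : 'I_n) (j : 'I_L) : bool :=
  (w j == inl k) &&
  (match w (radd j 1) with inr i => i != k | inl _ => false end).
Definition t1_res (n L : nat) (w : OWord n L) (j : 'I_L) : OWord n L :=
  swapw w j (radd j 1).

(* (T2) bullet_{k-1} C bullet_k Box_k -> bullet_{k-1} Box_{k-1} C bullet_k,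
   bullet_k at position j, bullet_{k-1} at position a;
   C occupies the m positions a+1,...,a+m, where m = off a j - 1 (n >= 2);
   for n = 1 (a = j) C is the rest of the ring, m = L - 1. *)
Definition t2_len (L : nat) (a j : 'I_L) : nat := (off a j + L - 1) %% L.
Definition t2_app (n L : nat) (w : OWord n L) (k : 'I_n) (j a : 'I_L) : bool :=
  [&& w j == inl k, w (radd j 1) == inr k, w a == inl (lpred k) &
      [forall t : 'I_L, (0 < t <= t2_len a j) ==> is_box (w (radd a t))]].
Definition t2_res (n L : nat) (w : OWord n L) (k : 'I_n) (j a : 'I_L) : OWord n L :=
  [ffun x => if x == radd j 1 then inl k
             else if x == radd a 1 then inr (lpred k)
             else if 0 < off (radd a 1) x <= t2_len a j then w (rpred x)
             else w x].

(* (T3) Box_i bullet_k -> bullet_k Box_i, i <> k, bullet_k at position j *)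
Definition t3_app (n L : nat) (w : OWord n L) (k : 'I_n) (j : 'I_L) : bool :=
  (w j == inl k) &&
  (match w (rpred j) with inr i => i != k | inl _ => false end).
Definition t3_res (n L : nat) (w : OWord n L) (j : 'I_L) : OWord n L :=
  swapw w (rpred j) j.

(* (T4) Box_k bullet_k C bullet_{k+1} -> bullet_k C Box_{k+1} bullet_{k+1},
   bullet_k at position j, bullet_{k+1} at position b;
   C occupies the m positions j+1,...,j+m, m = off j b - 1 (n >= 2);
   for n = 1 (b = j), m = L - 1. *)
Definition t4_app (n L : nat) (w : OWord n L) (k : 'I_n) (j b : 'I_L) : bool :=
  [&& w j == inl k, w (rpred j) == inr k, w b == inl (lsucc k) &
      [forall t : 'I_L, (0 < t <= t2_len j b) ==> is_box (w (radd j t))]].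
Definition t4_res (n L : nat) (w : OWord n L) (k : 'I_n) (j b : 'I_L) : OWord n L :=
  [ffun x => if x == rpred j then inl k
             else if x == rpred b then inr (lsucc k)
             else if off j x < t2_len j b then w (radd x 1)
             else w x].

Definition rateOmega (R : numDomainType) (n L : nat) (p q : 'I_n -> R)
  (w w' : OWord n L) : R :=
  \sum_(k : 'I_n) \sum_(j : 'I_L)
    ((if t1_app w k j && (t1_res w j == w') then p k else 0)
   + (\sum_(a : 'I_L) if t2_app w k j a && (t2_res w k j a == w') then p k else 0)
   + (if t3_app w k j && (t3_res w j == w') then q k else 0)
   + (\sum_(b : 'I_L) if t4_app w k j b && (t4_res w k j b == w') then q k else 0)).

Definition rateASEP (R : numDomainType) (n L : nat) (p q : 'I_n -> R)
  (v v' : PWord n L) : R :=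
  \sum_(k : 'I_n) \sum_(j : 'I_L)
    ((if [&& v j == inl k, v (radd j 1) == inr tt & swapw v j (radd j 1) == v']
      then p k else 0)
   + (if [&& v j == inl k, v (rpred j) == inr tt & swapw v (rpred j) j == v']
      then q k else 0)).

(* Main.v *)
Require Import Defs.
From mathcomp Require Import all_boot all_order all_algebra zify.
Import Order.TTheory GRing.Theory Num.Theory.
Set Implicit Arguments. Unset Strict Implicit. Unset Printing Implicit Defensive.

Lemma mod_lt2 L x : x < L + L -> x %% L = if x < L then x else x - L.
Proof.
move=> h2; case: (ltnP x L) => h1; first by rewrite modn_small.
by rewrite -{1}(subnK h1) modnDr modn_small //; lia.
Qed.

Lemma radd_mod L (a : 'I_L) m m' : m %% L = m' %% L -> radd a m = radd a m'.
Proof. by move=> h; apply: val_inj => /=; rewrite -modnDmr h modnDmr. Qed.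

Lemma radd0 L (a : 'I_L) : radd a 0 = a.
Proof. by apply: val_inj => /=; rewrite addn0 modn_small. Qed.

Lemma raddA L (a : 'I_L) m m' : radd (radd a m) m' = radd a (m + m').
Proof. by apply: val_inj => /=; rewrite modnDml addnA. Qed.

Lemma offP L (y x : 'I_L) t : t < L -> radd y t = x -> off y x = t.
Proof.
move=> ht <-; rewrite /off /=.
have hy := ltn_ord y.
rewrite (@mod_lt2 L (y + t)); last by lia.
case: ifP => h.
  by rewrite (_ : y + t + L - y = t + L) ?modnDr ?modn_small //; lia.
by rewrite (_ : y + t - L + L - y = t) ?modn_small //; lia.
Qed.

Lemma off_radd L (y : 'I_L) t : t < L -> off y (radd y t) = t.
Proof. by move=> ht; apply: offP. Qed.

Lemma off_lt L (y x : 'I_L) : off y x < L.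
Proof. by rewrite /off ltn_pmod // (leq_ltn_trans _ (ltn_ord x)). Qed.

Lemma radd_off L (y x : 'I_L) : radd y (off y x) = x.
Proof.
apply: val_inj => /=; rewrite /off modnDmr.
have hy := ltn_ord y.
by rewrite (_ : y + (x + L - y) = x + L) ?modnDr ?modn_small //; lia.
Qed.

Lemma radd_inj L (a : 'I_L) u v : u < L -> v < L -> (radd a u == radd a v) = (u == v).
Proof.
move=> hu hv; apply/eqP/eqP => [h|->] //.
by rewrite -(off_radd a hu) h off_radd.
Qed.

Lemma radd_eq L (a : 'I_L) u m : u < L -> (radd a u == radd a m) = (u == m %% L).
Proof.
move=> hu; have hL : 0 < L by lia.
by rewrite (@radd_mod L a m (m %% L)) ?modn_mod // radd_inj // ltn_pmod.
Qed.


Lemma lbul_Pi n L (w : OWord n L) x : lbul (Pi w x) = lbul (w x).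
Proof. by rewrite ffunE; case: (w x). Qed.

Lemma Pi_lbul n L (w1 w2 : OWord n L) :
  (forall x, lbul (w1 x) = lbul (w2 x)) -> Pi w1 = Pi w2.
Proof.
move=> H; apply/ffunP => x; rewrite !ffunE; have := H x.
by case: (w1 x) => [?|?]; case: (w2 x) => [?|?] //= [->].
Qed.

Lemma valid_lbul n L (B1 B2 : finType) (w1 : {ffun 'I_L -> ('I_n + B1)%type})
  (w2 : {ffun 'I_L -> ('I_n + B2)%type}) :
  (forall x, lbul (w1 x) = lbul (w2 x)) -> valid_word w1 = valid_word w2.
Proof.
move=> H; rewrite /valid_word; congr (_ && _).
  apply: eq_forallb => k; congr (_ == _); apply: eq_card => x; by rewrite !inE H.
apply: eq_forallb => x; apply: eq_forallb => k; rewrite H; congr (_ ==> _).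
apply: eq_existsb => d; rewrite H; congr (_ && _).
by apply: eq_forallb => e; rewrite H.
Qed.

Lemma Pi_swap n L (w : OWord n L) x y : Pi (swapw w x y) = swapw (Pi w) x y.
Proof. by apply/ffunP => z; rewrite !ffunE; case: (z == x); case: (z == y); rewrite ?ffunE. Qed.

Lemma Pi_inl n L (w : OWord n L) x k : (Pi w x == inl k) = (w x == inl k).
Proof. by rewrite ffunE; case: (w x). Qed.

Lemma Pi_box n L (w : OWord n L) x : (Pi w x == inr tt) = (lbul (w x) == None).
Proof. by rewrite ffunE; case: (w x) => // [[]]. Qed.

Lemma P_res n L (psi : PWord n L) (hpsi : inPsi psi) (r : OWord n L) v :
  Pi r = v -> (inOmega r && (Pi r == psi)) = (v == psi).
Proof.
move=> <-; case: eqP => [E|_]; last by rewrite andbF.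
rewrite andbT /inOmega (@valid_lbul n L _ _ r (Pi r)) ?E //.
by move=> x; rewrite -E lbul_Pi.
Qed.

Lemma sum_ind (R : numDomainType) (T : finType) (P : pred T) (b : bool) (r : T) (c : R) :
  (\sum_(x | P x) (if b && (r == x) then c else 0) = if b && P r then c else 0)%R.
Proof.
rewrite big_mkcond (bigD1 r) //= eqxx andbT big1 ?addr0.
  by case: b; case: (P r).
by move=> x /negbTE nx; rewrite eq_sym nx andbF; case: (P x).
Qed.

Lemma uniq_bul n L (B : finType) (w : {ffun 'I_L -> ('I_n + B)%type}) :
  valid_word w -> forall k, exists x, forall y, (lbul (w y) == Some k) = (y == x).
Proof.
move=> /andP [/forallP h1 _] k; have /cards1P [x hx] := h1 k.
exists x => y.
have : (y \in [set x0 | lbul (w x0) == Some k]) = (y \in [set x]) by rewrite hx.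
by rewrite !inE.
Qed.

Lemma next_bul n L (B : finType) (w : {ffun 'I_L -> ('I_n + B)%type}) :
  valid_word w -> forall x k, lbul (w x) = Some k ->
  exists d : 'I_L, lbul (w (radd x d.+1)) = Some (lsucc k) /\
     forall e : 'I_L, e < d -> lbul (w (radd x e.+1)) = None.
Proof.
move=> /andP [_ /forallP h2] x k hx.
have /forallP /(_ k) := h2 x; rewrite hx eqxx /= => /existsP [d /andP [/eqP h3 /forallP h4]].
exists d; split => // e he.
by have := h4 e; rewrite he => /eqP.
Qed.

Lemma lsucc_lpred n (k : 'I_n) : lsucc (lpred k) = k.
Proof.
apply: val_inj => /=; rewrite modnDml.
have hk := ltn_ord k.
by rewrite (_ : k + (n - 1) + 1 = k + n) ?modnDr ?modn_small //; lia.
Qed.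

Lemma t2_len_eq L (a : 'I_L) (d : nat) : d < L -> t2_len a (radd a d.+1) = d.
Proof.
move=> hd; rewrite /t2_len.
rewrite (@radd_mod L a d.+1 (d.+1 %% L)) ?modn_mod // off_radd ?ltn_pmod //; last by lia.
case: (ltnP d.+1 L) => h.
  by rewrite (modn_small h) (_ : d.+1 + L - 1 = d + L) ?modnDr ?modn_small //; lia.
have -> : d.+1 = L by lia.
by rewrite modnn add0n modn_small; lia.
Qed.


Lemma t4_pattern n L (w : OWord n L) k j d :
  d < L -> w j = inl k -> w (rpred j) = inr k ->
  (forall t, 0 < t <= d -> lbul (w (radd j t)) = None) ->
  forall x, lbul (t4_res w k j (radd j d.+1) x) = lbul (swapw w (rpred j) j x).
Proof.
move=> hd hj hpj hbox x.
have hL: 0 < L by lia.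
rewrite -(radd_off j x); have hu := off_lt j x; move: (off j x) hu => u hu.
have Ej : (radd j u == j) = (u == 0) by rewrite -{2}(radd0 j) radd_inj.
rewrite /t4_res /swapw !ffunE t2_len_eq // off_radd //.
move: hpj; rewrite /rpred !raddA => hpj.
rewrite !(radd_eq j _ hu) Ej.
rewrite (@modn_small (L - 1)); last by lia.
rewrite (_ : d.+1 + (L - 1) = d + L); last by lia.
rewrite modnDr modn_small //.
case: eqP => [_|h1]; first by rewrite hj.
case: eqP => [h2|h2].
  case: eqP => [h3|h3]; first by rewrite hpj.
  by rewrite hbox //; lia.
case: ifP => h4.
  rewrite hbox; last by lia.
  case: eqP => [h3|h3]; first by rewrite hpj.
  by rewrite hbox //; lia.
by case: eqP => [h3|//]; lia.
Qed.


Lemma t2_pattern n L (w : OWord n L) k a d :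
  d < L -> w (radd a d.+1) = inl k -> w (radd (radd a d.+1) 1) = inr k ->
  (forall t, 0 < t <= d -> lbul (w (radd a t)) = None) ->
  forall x, lbul (t2_res w k (radd a d.+1) a x)
          = lbul (swapw w (radd a d.+1) (radd (radd a d.+1) 1) x).
Proof.
move=> hd hj hj1 hbox x.
have hL2 : 1 < L.
  case: (ltnP 1 L) => // hl.
  suff E : radd (radd a d.+1) 1 = radd a d.+1 by move: hj1; rewrite E hj.
  move: (radd (radd a d.+1) 1) (radd a d.+1) => [y hy] [z hz]; apply: val_inj => /=; lia.
have hL: 0 < L by lia.
rewrite -(radd_off a x); have hu := off_lt a x; move: (off a x) hu => u hu.
have Eoff : off (radd a 1) (radd a u) = (u + (L - 1)) %% L.
  apply: offP; first by rewrite ltn_pmod.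
  rewrite raddA; apply: radd_mod; rewrite modnDmr.
  by rewrite (_ : 1 + (u + (L - 1)) = u + L) ?modnDr //; lia.
rewrite /t2_res /swapw !ffunE t2_len_eq // Eoff {Eoff}.
move: hj1; rewrite !raddA => hj1.
rewrite /rpred raddA !(radd_eq a _ hu).
rewrite (@modn_small 1) //.
have E1 : forall m, radd a m = radd a (m %% L).
  by move=> m; apply: radd_mod; rewrite modn_mod.
rewrite (E1 (u + (L - 1))) (E1 d.+1) (E1 (d.+1 + 1)).
move: hj hj1; rewrite (E1 d.+1) (E1 (d.+1 + 1)) => hj hj1.
have FJ : (d.+1 < L /\ d.+1 %% L = d.+1) \/ (d.+1 = L /\ d.+1 %% L = 0).
  case: (ltnP d.+1 L) => h; first by left; rewrite modn_small.
  by right; split; [lia | rewrite (_ : d.+1 = L) ?modnn //; lia].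
have FM : (d.+2 < L /\ (d.+1 + 1) %% L = d.+2) \/ (d.+2 = L /\ (d.+1 + 1) %% L = 0)
          \/ (d.+2 = L.+1 /\ (d.+1 + 1) %% L = 1).
  rewrite addn1; case: (ltnP d.+2 L) => h; first by left; rewrite modn_small.
  case: (ltnP L d.+2) => h'.
    right; right; split; first lia.
    by rewrite (_ : d.+2 = 1 + L) ?modnDr ?modn_small //; lia.
  right; left; split; first lia.
  by rewrite (_ : d.+2 = L) ?modnn //; lia.
have FS : (u = 0 /\ (u + (L - 1)) %% L = L - 1) \/ (0 < u /\ (u + (L - 1)) %% L = u.-1).
  case: u hu => [|u] hu; first by left; rewrite modn_small //; lia.
  by right; rewrite (_ : u.+1 + (L - 1) = u + L) ?modnDr ?modn_small //; lia.
move: (d.+1 %% L) ((d.+1 + 1) %% L) ((u + (L - 1)) %% L) FJ FM FS hj hj1 => J M s FJ FM FS hj hj1.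
have vJ : forall t, t = J -> lbul (w (radd a t)) = Some k by move=> t ->; rewrite hj.
have vM : forall t, t = M -> lbul (w (radd a t)) = None by move=> t ->; rewrite hj1.
repeat case: ifPn => ?.
all: first [ done | (exfalso; lia) | idtac ].
all: try (first [ rewrite [in X in X = _]vJ; last by lia
               | rewrite [in X in X = _]vM; last by lia
               | rewrite [in X in X = _]hbox; last by lia | idtac ]).
all: try (first [ rewrite [in X in _ = X]vJ; last by lia
               | rewrite [in X in _ = X]vM; last by lia
               | rewrite [in X in _ = X]hbox; last by lia | idtac ]).
all: first [ done | (congr (lbul (w (radd a _))); lia) | idtac ].
Qed.


Lemma pside (R : numDomainType) n L (hn : (0 < n)%N) (p : 'I_n -> R) (w : OWord n L)
  (hw : inOmega w) (psi : PWord n L) (hpsi : inPsi psi) k j :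
 ((if t1_app w k j && (inOmega (t1_res w j) && (Pi (t1_res w j) == psi)) then p k else 0)
 + \sum_(a : 'I_L) (if t2_app w k j a && (inOmega (t2_res w k j a) && (Pi (t2_res w k j a) == psi)) then p k else 0)
 = if [&& Pi w j == inl k, Pi w (radd j 1) == inr tt & swapw (Pi w) j (radd j 1) == psi] then p k else 0)%R.
Proof.
rewrite Pi_inl Pi_box.
have [Hj|Hj] := eqVneq (w j) (inl k); last first.
  by rewrite /t1_app /t2_app (negbTE Hj) /= add0r big1.
rewrite /t1_app /t2_app Hj eqxx /=.
case Ej1: (w (radd j 1)) => [k'|i] /=.
  by rewrite add0r big1.
have [Eik|ni] := eqVneq i k; last first.
  rewrite /= big1 ?addr0; last first.
    move=> a _; rewrite (_ : (inr i == inr k :> OLetter n) = false) //.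
    by apply/eqP => [[]]; apply/eqP.
  by rewrite (@P_res n L psi hpsi _ (swapw (Pi w) j (radd j 1))) // Pi_swap.
subst i; rewrite /= add0r.
have [a0 ha] := uniq_bul hw (lpred k).
have wa0 : lbul (w a0) = Some (lpred k) by apply/eqP; rewrite ha.
have wa0' : w a0 = inl (lpred k) by move: wa0; case: (w a0) => // ? [->].
have [d [hd1 hd2]] := next_bul hw wa0.
rewrite lsucc_lpred in hd1.
have [j0 hj0] := uniq_bul hw k.
have Ej : radd a0 d.+1 = j.
  have := hj0 j; have := hj0 (radd a0 d.+1); rewrite hd1 Hj !eqxx.
  by move=> /esym/eqP -> /esym/eqP ->.
have hdL := ltn_ord d.
have hbox : forall t, 0 < t <= d -> lbul (w (radd a0 t)) = None.
  move=> t /andP [t0 td]; have ht : t.-1 < L by lia.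
  rewrite -(prednK t0); apply: (hd2 (Ordinal ht)) => /=; lia.
subst j.
rewrite (bigD1 a0) //= big1 ?addr0; last first.
  move=> a na; rewrite (_ : (w a == inl (lpred k)) = false) ?andbF //.
  apply/negbTE/negP => /eqP wa; move: (ha a); rewrite wa eqxx (negbTE na).
  by [].
rewrite wa0' eqxx /=.
have -> : [forall t : 'I_L, (0 < t <= t2_len a0 (radd a0 d.+1)) ==> is_box (w (radd a0 t))].
  apply/forallP => t; apply/implyP; rewrite t2_len_eq // => /hbox.
  by rewrite /is_box => ->.
rewrite (@P_res n L psi hpsi _ (swapw (Pi w) (radd a0 d.+1) (radd (radd a0 d.+1) 1))); last first.
  by rewrite -Pi_swap; apply: Pi_lbul; apply: t2_pattern => //.
by rewrite eqxx.
Qed.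

Lemma qside (R : numDomainType) n L (hn : (0 < n)%N) (q : 'I_n -> R) (w : OWord n L)
  (hw : inOmega w) (psi : PWord n L) (hpsi : inPsi psi) k j :
 ((if t3_app w k j && (inOmega (t3_res w j) && (Pi (t3_res w j) == psi)) then q k else 0)
 + \sum_(b : 'I_L) (if t4_app w k j b && (inOmega (t4_res w k j b) && (Pi (t4_res w k j b) == psi)) then q k else 0)
 = if [&& Pi w j == inl k, Pi w (rpred j) == inr tt & swapw (Pi w) (rpred j) j == psi] then q k else 0)%R.
Proof.
rewrite Pi_inl Pi_box.
have [Hj|Hj] := eqVneq (w j) (inl k); last first.
  by rewrite /t3_app /t4_app (negbTE Hj) /= add0r big1.
rewrite /t3_app /t4_app Hj eqxx /=.
case Ej1: (w (rpred j)) => [k'|i] /=.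
  by rewrite add0r big1.
have [Eik|ni] := eqVneq i k; last first.
  rewrite /= big1 ?addr0; last first.
    move=> a _; rewrite (_ : (inr i == inr k :> OLetter n) = false) //.
    by apply/eqP => [[]]; apply/eqP.
  by rewrite (@P_res n L psi hpsi _ (swapw (Pi w) (rpred j) j)) // Pi_swap.
subst i; rewrite /= add0r.
have wj : lbul (w j) = Some k by rewrite Hj.
have [d [hd1 hd2]] := next_bul hw wj.
have [b0 hb0] := uniq_bul hw (lsucc k).
have Eb : radd j d.+1 = b0.
  by have := hb0 (radd j d.+1); rewrite hd1 eqxx => /esym/eqP.
have hdL := ltn_ord d.
have hbox : forall t, 0 < t <= d -> lbul (w (radd j t)) = None.
  move=> t /andP [t0 td]; have ht : t.-1 < L by lia.
  rewrite -(prednK t0); apply: (hd2 (Ordinal ht)) => /=; lia.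
subst b0.
rewrite (bigD1 (radd j d.+1)) //= big1 ?addr0; last first.
  move=> a na; rewrite (_ : (w a == inl (lsucc k)) = false) ?andbF //.
  apply/negbTE/negP => /eqP wa; move: (hb0 a); rewrite wa eqxx (negbTE na).
  by [].
have -> : w (radd j d.+1) = inl (lsucc k) by move: hd1; case: (w _) => // ? [->].
rewrite eqxx /=.
have -> : [forall t : 'I_L, (0 < t <= t2_len j (radd j d.+1)) ==> is_box (w (radd j t))].
  apply/forallP => t; apply/implyP; rewrite t2_len_eq // => /hbox.
  by rewrite /is_box => ->.
rewrite (@P_res n L psi hpsi _ (swapw (Pi w) (rpred j) j)); last first.
  by rewrite -Pi_swap; apply: Pi_lbul; apply: t4_pattern.
by rewrite eqxx.
Qed.

Unset Implicit Arguments. Set Strict Implicit. Set Printing Implicit Defensive.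
Local Open Scope ring_scope.

Theorem proposition3p2 (R : realDomainType) (n L : nat)
  (hn : (1 <= n)%N) (hnL : (n <= L)%N)
  (p q : 'I_n -> R) (hp : forall k, 0 <= p k) (hq : forall k, 0 <= q k)
  (w : OWord n L) (hw : inOmega w)
  (psi : PWord n L) (hpsi : inPsi psi) (hne : psi != Pi w) :
  \sum_(w' : OWord n L | inOmega w' && (Pi w' == psi)) rateOmega p q w w'
  = rateASEP p q (Pi w) psi.
Proof.
rewrite /rateOmega /rateASEP exchange_big; apply: eq_bigr => k _.
rewrite exchange_big; apply: eq_bigr => j _.
rewrite !big_split /=.
rewrite (exchange_big _ _ _ (fun w' => inOmega w' && (Pi w' == psi))).
rewrite (exchange_big _ _ _ (fun w' => inOmega w' && (Pi w' == psi))).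
rewrite !(@sum_ind R _ (fun w' => inOmega w' && (Pi w' == psi))).
under eq_bigr => a _ do rewrite (@sum_ind R _ (fun w' => inOmega w' && (Pi w' == psi))).
under [X in _ + _ + _ + X]eq_bigr => a _ do rewrite (@sum_ind R _ (fun w' => inOmega w' && (Pi w' == psi))).
rewrite -(pside hn p hw hpsi k j) -(qside hn q hw hpsi k j).
by rewrite !addrA.
Qed.
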